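(* For every $\alpha\in\bar{\mathbb{Q}}$ we have $H(\alpha)\ge H(H(\alpha))$, with equality if and only if $H(\alpha)=a^b$ for some $a\in\mathbb{N}$ and some rational $b>0$.
   Context: $\bar{\mathbb{Q}}$ is the algebraic closure of $\mathbb{Q}$ in $\mathbb{C}$. $H:\bar{\mathbb{Q}}\to\bar{\mathbb{Q}}\cap[1,\infty)$ is the absolute multiplicative Weil height: for $\alpha$ of degree $d$ with $a_0>0$ the leading coefficient of a minimal polynomial of $\alpha$ in $\mathbb{Z}[t]$ and conjugates $\alpha_1,\dots,\alpha_d$, $H(\alpha)=\big(a_0\prod_i\max\{1,|\alpha_i|\}\big)^{1/d}$ (this value is again algebraic, so $H$ can be iterated). *)

(* Defs.v *)
From HB Require Import structures.
From mathcomp Require Import all_boot all_order all_algebra all_field.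
From Stdlib Require Import ClassicalEpsilon.
Set Implicit Arguments. Unset Strict Implicit. Unset Printing Implicit Defensive.
Import Order.TTheory GRing.Theory Num.Theory.
Local Open Scope ring_scope.

(* Qbar is modelled by algC, the algebraic closure of Q in C. *)

Definition minpolyQ (x : algC) : {poly algC} := minCpoly x.

Definition degQ (x : algC) : nat := (size (minpolyQ x)).-1.

Definition leadZ_pred (x : algC) : pred nat :=
  fun n => (0 < n)%N && ((n%:R *: minpolyQ x) \is a polyOver Num.int).

(* a_0 : the positive leading coefficient of the minimal polynomial of x in Z[t]
   (primitive, positive leading coefficient), i.e. the least n > 0 such that
   n * (monic minimal polynomial) lies in Z[t]. *)
Definition leadZ (x : algC) : nat :=
  match excluded_middle_informative (exists n, leadZ_pred x n) with
  | left H => ex_minn H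
  | right _ => 0%N
  end.

Definition conjugates (x : algC) : seq algC :=
  sval (closed_field_poly_normal (minpolyQ x)).

Definition weilH (x : algC) : algC :=
  (degQ x).-root ((leadZ x)%:R * \prod_(r <- conjugates x) Num.max 1 `|r|).

Definition ratpow (a : algC) (b : rat) : algC :=
  (absz (denq b)).-root (a ^ numq b).

(* Main.v *)
Require Import Defs.
From HB Require Import structures.
From mathcomp Require Import all_boot all_order all_algebra all_field.
From mathcomp Require Import zify.
From Stdlib Require Import ClassicalEpsilon.
Import Order.TTheory GRing.Theory Num.Theory.
Set Implicit Arguments. Unset Strict Implicit. Unset Printing Implicit Defensive.
Local Open Scope ring_scope.

Lemma AintFromSpan (s : seq algC) x :
  has (fun y => y != 0) s -> {in s, forall z, x * z \in Cint_span s} -> x \in Aint.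
Proof.
move=> nz_s sxs.
pose n := size s; pose Y := in_tuple s.
have ZP_C c: (c%:~R : algC)%:P \is a polyOver Num.int_num_subdef.
  by rewrite raddfMz rpred_int.
pose v := \row_(i < n) Y`_i.
have nz_v : v != 0.
  case/hasP: nz_s => y ys nzy; have iy : (index y s < n)%N by rewrite index_mem.
  apply/eqP => /rowP/(_ (Ordinal iy)); rewrite !mxE /= nth_index //; exact/eqP.
have sYS (i : 'I_n): x * Y`_i \in Cint_span s by apply: sxs; exact: mem_nth.
pose A := \matrix_(i, j < n) sval (sig_eqW (Cint_spanP Y _ (sYS j))) i.
pose p := char_poly (map_mx (intr : int -> algC) A).
have: p \is a polyOver Num.int_num_subdef.
  rewrite rpred_sum // => sg _; rewrite rpredMsign rpred_prod // => j _.
  by rewrite !mxE /= rpredB ?rpredMn ?polyOverX.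
apply: root_monic_Aint (char_poly_monic _).
rewrite -eigenvalue_root_char; apply/eigenvalueP; exists v => //.
apply/rowP=> j; case dAj: (sig_eqW (Cint_spanP Y _ (sYS j))) => [a DxY].
by rewrite !mxE DxY; apply: eq_bigr => i _; rewrite !mxE dAj /= mulrzr.
Qed.

Definition Tspan (S : {pred algC}) (r : algC) (N : nat) (z : algC) :=
  exists d : nat -> algC, (forall j, d j \in S) /\ z = \sum_(j < N.+1) d j * r ^+ j.

Lemma AintMod (X : seq algC) r x N :
  {subset X <= Aint} ->
  (forall S : {pred algC}, subring_closed S -> {subset X <= S} ->
     forall e, (e <= N)%N -> Tspan S r N (x * r ^+ e)) -> x \in Aint.
Proof.
move=> XA hyp.
have [S [ringS XS] [[m Y] /= YS SP]] := Aint_subring_exists XA.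
have [S1 SB SM] := ringS.
pose s := [seq y * r ^+ j | y <- (Y : seq algC), j <- iota 0 N.+1].
have Ys (l : 'I_m) (i : nat) : (i <= N)%N -> Y`_l * r ^+ i \in s.
  move=> iN; apply/allpairsP; exists (Y`_l, i) => /=; split=> //.
    by apply: mem_nth; rewrite size_tuple.
  by rewrite -[0%N :: _]/(iota 0 N.+1) mem_iota add0n ltnS.
apply: (AintFromSpan (s := s)).
  have /SP [a Da] := S1.
  have : exists l : 'I_m, Y`_l != 0.
    apply/existsP; apply: contraT; rewrite negb_exists => /forallP Y0.
    suff : (1 : algC) = 0 by move/eqP; rewrite oner_eq0.
    rewrite Da big1 // => l _.
    by move: (Y0 l); rewrite negbK => /eqP ->; rewrite mul0rz.
  case=> l nzl; apply/hasP; exists (Y`_l * r ^+ 0); first exact: Ys.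
  by rewrite expr0 mulr1.
move=> z /allpairsP [[y j] /= [yY jI ->]].
have jN : (j <= N)%N by move: jI; rewrite -[0%N :: _]/(iota 0 N.+1) mem_iota add0n ltnS.
have [d [dS Dd]] := hyp S ringS XS j jN.
have yS : y \in S by apply: YS.
rewrite mulrCA Dd mulr_sumr.
have spanZ : zmod_closed (Cint_span s) by apply: Cint_span_zmod_closed.
apply: rpred_sum => i _.
have /SP [a Da] : y * d i \in S by apply: SM.
rewrite mulrA Da mulr_suml; apply: rpred_sum => l _.
rewrite mulrzAl; apply: rpredMz.
by apply: mem_Cint_span; apply: Ys; rewrite -ltnS.
Qed.

Section Tspan.
Variables (S : {pred algC}) (ringS : subring_closed S) (r : algC) (N : nat).

Lemma S1 : 1 \in S. Proof. by case: ringS. Qed.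
Lemma SB : {in S &, forall u v, u - v \in S}. Proof. by case: ringS. Qed.
Lemma SM : {in S &, forall u v, u * v \in S}. Proof. by case: ringS. Qed.
Lemma S0 : 0 \in S. Proof. by rewrite -(subrr 1) SB // S1. Qed.
Lemma SN u : u \in S -> - u \in S. Proof. by move=> Su; rewrite -sub0r SB // S0. Qed.
Lemma SD : {in S &, forall u v, u + v \in S}.
Proof. by move=> u v Su Sv; rewrite -[v]opprK SB // SN. Qed.

Lemma T0 : Tspan S r N 0.
Proof. by exists (fun _ => 0); split=> [j|]; rewrite ?S0 // big1 // => i; rewrite mul0r. Qed.

Lemma TD z1 z2 : Tspan S r N z1 -> Tspan S r N z2 -> Tspan S r N (z1 + z2).
Proof.
case=> d1 [S1d ->] [d2 [S2d ->]]; exists (fun j => d1 j + d2 j); split.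
  by move=> j; rewrite SD.
by rewrite -big_split; apply: eq_bigr => i _; rewrite mulrDl.
Qed.

Lemma TN z : Tspan S r N z -> Tspan S r N (- z).
Proof.
case=> d [Sd ->]; exists (fun j => - d j); split; first by move=> j; rewrite SN.
by rewrite -sumrN; apply: eq_bigr => i _; rewrite mulNr.
Qed.

Lemma Tsum (I : Type) (s : seq I) (P : pred I) (f : I -> algC) :
  (forall i, P i -> Tspan S r N (f i)) -> Tspan S r N (\sum_(i <- s | P i) f i).
Proof. by move=> H; apply: (big_ind (Tspan S r N)) => //; [apply: T0 | apply: TD]. Qed.

Lemma Tterm c j : c \in S -> (j <= N)%N -> Tspan S r N (c * r ^+ j).
Proof.
move=> Sc jN; exists (fun i => if i == j then c else 0); split.
  by move=> i; case: ifP => _; rewrite ?S0.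
have jN' : (j < N.+1)%N by [].
rewrite (bigD1 (Ordinal jN')) //= eqxx big1 ?addr0 // => i /negPf.
by move=> ne; rewrite -val_eqE /= in ne; rewrite ne mul0r.
Qed.

End Tspan.

Lemma AintClosed (p : {poly algC}) x :
  p \is monic -> p \is a polyOver Aint -> root p x -> x \in Aint.
Proof.
move=> mon Ap px.
have szp : (1 < size p)%N.
  apply: root_size_gt1 px; exact: monic_neq0.
set n := (size p).-1.
have Dn : size p = n.+1 by rewrite /n prednK // ltnW.
have n0 : (0 < n)%N by rewrite /n -subn1 subn_gt0.
have XA : {subset (p : seq algC) <= Aint} by move=> c /(nthP 0) [i _ <-]; apply: (polyOverP Ap).
apply: (AintMod (r := x) (N := n.-1) XA) => S ringS XS e eN.
have Sp i : p`_i \in S.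
  have [ip | ip] := ltnP i (size p); first by apply: XS; apply: mem_nth.
  by rewrite nth_default // S0.
rewrite -exprS.
have [lt | ge] := ltnP e.+1 n.
  by rewrite -[_ ^+ _]mul1r; apply: Tterm => //; [apply: S1 | rewrite -ltnS prednK].
have En : e.+1 = n.
  apply/eqP; rewrite eqn_leq ge andbT.
  by rewrite -(prednK n0) ltnS.
rewrite En.
move: px; rewrite /root horner_coef Dn big_ord_recr /=.
have -> : p`_n = 1 by move/monicP: mon; rewrite lead_coefE.
rewrite mul1r addrC addr_eq0 => /eqP ->.
apply: TN => //; apply: Tsum => // i _.
by apply: Tterm => //; rewrite -ltnS prednK ?ltn_ord.
Qed.

Lemma Aint_div (G : {poly algC}) t :
  ('X - t%:P) * G \is a polyOver Aint -> G \is a polyOver Aint.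
Proof.
set F := _ * G => AF.
have cF0 : F`_0 = - (t * G`_0) by rewrite /F mulrBl coefB coefXM coefCM sub0r.
have cFS k : F`_k.+1 = G`_k - t * G`_k.+1 by rewrite /F mulrBl coefB coefXM coefCM.
set n := size G.
have I1 : forall j k, (k + j)%N = n -> G`_k = \sum_(i < j) F`_(k.+1 + i) * t ^+ i.
  elim=> [|j IH] k.
    by rewrite addn0 big_ord0 => Ek; rewrite nth_default // -/n Ek.
  move=> Ekj; rewrite big_ord_recl /= addn0 expr0 mulr1 cFS.
  rewrite (IH k.+1) ?addSnnS // mulr_sumr.
  rewrite [X in _ + X](eq_bigr (fun i : 'I_j => t * (F`_(k.+2 + i) * t ^+ i))) ?subrK // => i _.
  by rewrite exprS mulrCA /bump leq0n add1n addnS addSn.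
have I2 : forall k, G`_k * t ^+ k.+1 = - \sum_(i < k.+1) F`_i * t ^+ i.
  elim=> [|k IH]; first by rewrite big_ord1 expr1 expr0 mulr1 cF0 opprK mulrC.
  rewrite big_ord_recr /= opprD -IH cFS.
  by rewrite mulrBl opprB addrC subrK exprS mulrCA mulrA.
apply/polyOverP => k.
have [kn | kn] := ltnP k n; last by rewrite nth_default // rpred0.
have XA : {subset (F : seq algC) <= Aint}.
  by move=> c /(nthP 0) [i _ <-]; apply: (polyOverP AF).
apply: (AintMod (r := t) (N := n) XA) => S ringS XS e eN.
have SF i : F`_i \in S.
  have [ip | ip] := ltnP i (size F); first by apply: XS; apply: mem_nth.
  by rewrite nth_default // S0.
have [ek | ke] := leqP e k.
  rewrite (I1 (n - k)%N k) ?subnKC 1?ltnW // mulr_suml.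
  apply: Tsum => // i _; rewrite -mulrA -exprD; apply: Tterm => //.
  have := ltn_ord i; rewrite ltn_subRL => h.
  lia.
rewrite -(subnKC ke) exprD mulrA I2 mulNr mulr_suml; apply: TN => //.
apply: Tsum => // i _; rewrite -mulrA -exprD; apply: Tterm => //.
have := ltn_ord i; lia.
Qed.

Lemma leadZ_exists x : exists n, leadZ_pred x n.
Proof.
have [q [Dq _] _] := minCpolyP x.
pose n := (\prod_(i < size q) absz (denq q`_i))%N.
have n0 : (0 < n)%N by rewrite prodn_gt0 // => i; rewrite absz_gt0 denq_neq0.
exists n; rewrite /leadZ_pred n0 /minpolyQ Dq /=.
apply/polyOverP => i; rewrite coefZ coef_map /=.
have [iq | iq] := ltnP i (size q); last by rewrite nth_default // rmorph0 mulr0 rpred0.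
rewrite /n (bigD1 (Ordinal iq)) //= natrM -mulrA mulrC -mulrA.
have -> : ((absz (denq q`_i))%:R : algC) = ratr ((denq q`_i)%:~R).
  by rewrite rmorph_int -[X in X%:~R]gez0_abs ?ltW ?denq_gt0.
rewrite -rmorphM /= -numqE rmorph_int.
by rewrite rpredM ?rpred_nat ?rpred_int.
Qed.

Lemma leadZP x : leadZ_pred x (leadZ x) /\
  (forall m, leadZ_pred x m -> (leadZ x <= m)%N).
Proof.
rewrite /leadZ; case: excluded_middle_informative => [H|nH].
  by case: ex_minnP.
by case: nH; apply: leadZ_exists.
Qed.

Lemma leadZ_gt0 x : (0 < leadZ x)%N.
Proof. by have [/andP [] ] := leadZP x. Qed.

Lemma leadZ_int x : (leadZ x)%:R *: minpolyQ x \is a polyOver Num.int.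
Proof. by have [/andP [] ] := leadZP x. Qed.

Lemma leadZ_Aint x : x \in Aint -> leadZ x = 1%N.
Proof.
move=> Ax; have [_ min] := leadZP x.
have : (leadZ x <= 1)%N.
  by apply: min; rewrite /leadZ_pred /= scale1r.
by have := leadZ_gt0 x; case: (leadZ x) => [|[|]].
Qed.

Lemma conjP x : minCpoly x = \prod_(r <- conjugates x) ('X - r%:P).
Proof.
rewrite /conjugates; case: closed_field_poly_normal => rs /= Drs.
by rewrite /minpolyQ in Drs; rewrite {1}Drs (monicP (minCpoly_monic x)) scale1r.
Qed.

Lemma size_conj x : size (conjugates x) = degQ x.
Proof. by rewrite /degQ /minpolyQ conjP size_prod_XsubC. Qed.

Lemma degQ_gt0 x : (0 < degQ x)%N.
Proof. by rewrite /degQ /minpolyQ -subn1 subn_gt0 size_minCpoly. Qed.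

Lemma remove_factors (us : seq algC) (H : {poly algC}) :
  (\prod_(u <- us) ('X - u%:P)) * H \is a polyOver Aint -> H \is a polyOver Aint.
Proof.
elim: us => [|u us IH]; first by rewrite big_nil mul1r.
by rewrite big_cons -mulrA => /Aint_div /IH.
Qed.

Lemma gammaA x (P : pred algC) :
  (leadZ x)%:R * \prod_(r <- conjugates x | P r) r \in Aint.
Proof.
set rs := conjugates x; set a0 := leadZ x.
have h0 : (a0%:R *: minCpoly x) \is a polyOver Aint.
  by apply: polyOverS (leadZ_int x); exact: Aint_Cint.
have h1 : (a0%:R%:P * \prod_(r <- rs | P r) ('X - r%:P)) \is a polyOver Aint.
  apply: (@remove_factors [seq r <- rs | ~~ P r]).
  rewrite big_filter mul_polyC -scalerAr.
  suff -> : \prod_(i <- rs | ~~ P i) ('X - i%:P) * \prod_(r <- rs | P r) ('X - r%:P)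
           = minCpoly x by [].
  by rewrite conjP [RHS](bigID P) /= mulrC.
have := polyOverP h1 0; rewrite coefCM -big_filter coef0_prod_XsubC big_filter => h.
have s1 : (-1) ^+ size [seq r <- rs | P r] \in Aint by rewrite rpredX ?rpredN ?rpred1.
by have := rpredM s1 h; rewrite mulrCA signrMK.
Qed.

Lemma aut_exists (b s : algC) : root (minCpoly b) s ->
  exists nu : {rmorphism algC -> algC}, nu b = s.
Proof.
move=> rs0.
set rsb := conjugates b.
have Db := conjP b; rewrite -/rsb in Db.
have brs : b \in rsb by rewrite -root_prod_XsubC -Db root_minCpoly.
have srs : s \in rsb by rewrite -root_prod_XsubC -Db.
have [Qn [QnC [rs1 Drs1 gen]]] := num_field_exists rsb.
have [bn bn1 Dbn] : exists2 bn, bn \in rs1 & b = QnC bn.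
  by move: brs; rewrite -Drs1 => /mapP.
have [sn sn1 Dsn] : exists2 sn, sn \in rs1 & s = QnC sn.
  by move: srs; rewrite -Drs1 => /mapP.
have [q [Dq _] minq] := minCpolyP b.
pose p1 : {poly Qn} := map_poly (in_alg Qn) q.
have p1Q : p1 \is a polyOver 1%VS.
  apply/polyOverP => i; rewrite /p1 coef_map /=.
  by rewrite memvZ // mem1v.
have mapp1 : map_poly QnC p1 = minCpoly b.
  rewrite Dq -map_poly_comp; apply: eq_map_poly => a /=.
  by rewrite alg_num_field fmorph_rat.
have Dp1 : p1 = \prod_(z <- rs1) ('X - z%:P).
  apply: (@map_poly_inj _ _ QnC); rewrite mapp1 rmorph_prod /= Db -Drs1 big_map.
  by apply: eq_bigr => z _; rewrite map_polyXsubC.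
have split1 : splittingFieldFor <<1; bn>> p1 fullv.
  exists rs1; first by rewrite Dp1 eqpxx.
  apply/eqP; rewrite eqEsubv subvf -gen /= adjoin_seqSl //.
  exact: subv_adjoin.
have rmin : root (minPoly 1 bn) sn.
  have aP i : (minPoly 1 bn)`_i \in 1%VS by apply/polyOverP; apply: minPolyOver.
  have a_ i := sig_eqW (vlineP _ _ (aP i)).
  pose q1 := \poly_(i < size (minPoly 1 bn)) sval (a_ i).
  have Dq1 : map_poly QnC (minPoly 1 bn) = map_poly ratr q1.
    apply/polyP=> i; rewrite coef_poly coef_map coef_poly /=.
    case: ifP => _; rewrite ?rmorph0 //; case: (a_ i) => a /= ->.
    by rewrite alg_num_field fmorph_rat.
  have : root (map_poly ratr q1) b.
    by rewrite -Dq1 Dbn fmorph_root root_minPoly.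
  rewrite minq => /dvdpP [r1 Dr1].
  rewrite -(fmorph_root QnC) Dq1 Dr1 rmorphM rootM /= -Dq -Dsn.
  by rewrite rs0 orbT.
have hom1 : kHom 1 <<1; bn>> (kHomExtend 1 \1 bn sn).
  by apply: kHomExtendP; rewrite ?kHom1 ?lfun1_poly ?sub1v.
have [g homg Dg] := kHom_extends (subv_adjoin 1 bn) hom1 p1Q split1.
have gbn : g bn = sn.
  by rewrite -Dg ?memv_adjoin // (kHomExtend_val (kHom1 1 1)) ?lfun1_poly.
have phim : monoid_morphism g by apply/kHom_monoid_morphism.
pose phimM := GRing.isMonoidMorphism.Build _ _ g phim.
pose phiRM : {rmorphism _ -> _} := HB.pack (fun_of_lfun g) phimM.
have [nu Dnu] := extend_algC_subfield_aut QnC phiRM.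
exists nu; rewrite Dbn -Dnu /= gbn //.
Qed.

Lemma maxE1 (x : algC) : Num.max 1 x = if 1 < x then x else 1.
Proof. by []. Qed.

Lemma rootXK n (x : algC) : (0 < n)%N -> 0 <= x -> n.-root (x ^+ n) = x.
Proof.
move=> n0 x0; apply/eqP; rewrite -(eqrXn2 n0) ?rootCK // ?rootC_ge0 // exprn_ge0 //.
Qed.

Lemma max1_ge1 (x : algC) : 1 <= Num.max 1 x.
Proof. by rewrite maxE1; case: ifP => // /ltW. Qed.

Lemma max1_ge (x : algC) : x \is Num.real -> x <= Num.max 1 x.
Proof.
move=> xr; rewrite maxE1; case: ifP => // /negbT.
by rewrite -real_leNgt ?rpred1.
Qed.

Lemma prod_ge1 (I : Type) (s : seq I) (f : I -> algC) :
  (forall i, 1 <= f i) -> 1 <= \prod_(i <- s) f i.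
Proof.
move=> h; apply: (big_ind (fun x => 1 <= x)) => // x y; exact: mulr_ege1.
Qed.

Lemma prod_le_pow (I : eqType) (s : seq I) (f : I -> algC) c :
  (forall i, i \in s -> 0 <= f i <= c) -> \prod_(i <- s) f i <= c ^+ size s.
Proof.
elim: s => [|i s IH] h; first by rewrite big_nil expr0.
rewrite big_cons exprS /=; have /andP [f0 fc] := h i (mem_head _ _).
apply: ler_pM => //.
  rewrite big_seq; apply: prodr_ge0 => j js.
  by have /andP [] := h j (@mem_behead _ (i :: s) _ js).
by apply: IH => j js; apply: h; rewrite in_cons js orbT.
Qed.

Lemma prod_eq_pow (I : eqType) (s : seq I) (f : I -> algC) c :
  0 < c -> (forall i, i \in s -> 0 < f i <= c) ->
  \prod_(i <- s) f i = c ^+ size s -> forall i, i \in s -> f i = c.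
Proof.
move=> c0; elim: s => [|i s IH] h //=.
rewrite big_cons exprS => E.
have /andP [f0 fc] := h i (mem_head _ _).
have hs : forall j, j \in s -> 0 < f j <= c.
  by move=> j js; apply: h; rewrite in_cons js orbT.
have Ps : \prod_(j <- s) f j <= c ^+ size s.
  by apply: prod_le_pow => j js; have /andP [/ltW -> ->] := hs j js.
have fic : f i = c.
  move: fc; rewrite le_eqVlt => /orP [/eqP // | lt].
  have : f i * \prod_(j <- s) f j < c * c ^+ size s.
    apply: (le_lt_trans (y := f i * c ^+ size s)).
      by rewrite ler_pM2l.
    by rewrite ltr_pM2r // exprn_gt0.
  by rewrite E ltxx.
move=> j; rewrite in_cons => /orP [/eqP -> // | js].
apply: IH => //; apply: (mulfI (x := c)); first by rewrite gt_eqF.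
by rewrite -E fic.
Qed.

Definition Mv x := (leadZ x)%:R * \prod_(r <- conjugates x) Num.max 1 `|r|.
Definition gam x := (leadZ x)%:R * \prod_(r <- conjugates x) (if 1 < `|r| then r else 1).

Lemma weilHE x : weilH x = (degQ x).-root (Mv x). Proof. by []. Qed.

Lemma Mv_ge1 x : 1 <= Mv x.
Proof.
apply: mulr_ege1; first by rewrite ler1n leadZ_gt0.
by apply: prod_ge1 => r; exact: max1_ge1.
Qed.

Lemma weilH_ge1 x : 1 <= weilH x.
Proof. by rewrite weilHE rootC_ge1 ?degQ_gt0 ?Mv_ge1. Qed.

Lemma weilH_pow x : weilH x ^+ degQ x = Mv x.
Proof. by rewrite weilHE rootCK ?degQ_gt0. Qed.

Lemma norm_gam x : `|gam x| = Mv x.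
Proof.
rewrite /gam /Mv normrM normr_nat normr_prod; congr (_ * _).
apply: eq_bigr => r _; rewrite maxE1; case: ifP => _ //; exact: normr1.
Qed.

Lemma gam_Aint x : gam x \in Aint.
Proof.
have := gammaA x (fun r => 1 < `|r|).
by rewrite big_mkcond.
Qed.

Lemma perm_aut x (mu : {rmorphism algC -> algC}) :
  perm_eq (map mu (conjugates x)) (conjugates x).
Proof.
have E : forall rs : seq algC, map_poly mu (\prod_(r <- rs) ('X - r%:P))
    = \prod_(r <- map mu rs) ('X - r%:P).
  elim=> [|r rs IH]; first by rewrite !big_nil rmorph1.
  by rewrite big_cons rmorphM /= IH map_polyXsubC /= big_cons.
apply: prod_XsubC_eq; rewrite -E -conjP.
have [q [Dq _] _] := minCpolyP x.
rewrite Dq -map_poly_comp; apply: eq_map_poly => a /=; exact: fmorph_rat.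
Qed.

Lemma gam_aut_le x (mu : {rmorphism algC -> algC}) : `|mu (gam x)| <= Mv x.
Proof.
rewrite /gam rmorphM rmorph_nat rmorph_prod normrM normr_nat normr_prod /Mv.
apply: ler_wpM2l => //.
rewrite -[X in _ <= X](perm_big _ (perm_aut x mu)) big_map.
apply: ler_prod => r _; rewrite normr_ge0 /=.
rewrite (fun_if mu) rmorph1; case: ifP => _.
  by apply: max1_ge; exact: normr_real.
by rewrite normr1 max1_ge1.
Qed.

Lemma weilH_pow2 x : weilH x ^+ (degQ x * 2) = gam x * (gam x)^*.
Proof. by rewrite exprM weilH_pow -norm_gam normCK. Qed.

Lemma weilH_Aint x : weilH x \in Aint.
Proof.
pose c := gam x * (gam x)^*.
apply: (@AintClosed ('X^(degQ x * 2) - c%:P)).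
- by apply: monicXnsubC; rewrite muln_gt0 degQ_gt0.
- rewrite polyOverXnsubC /c rpredM ?gam_Aint //.
  by rewrite (Aint_aut Num.Def.conjC) gam_Aint.
- by rewrite /root !hornerE weilH_pow2 subrr.
Qed.

Lemma conj_le x s : root (minCpoly (weilH x)) s -> `|s| <= weilH x.
Proof.
move=> rs; have [nu Dnu] := aut_exists rs.
have d0 : (0 < degQ x * 2)%N by rewrite muln_gt0 degQ_gt0.
rewrite -(ler_pXn2r d0) ?nnegrE ?normr_ge0 //; last first.
  by rewrite (le_trans ler01) ?weilH_ge1.
rewrite [X in _ <= X]exprM weilH_pow expr2.
rewrite -normrX -Dnu -rmorphXn weilH_pow2 rmorphM normrM.
apply: ler_pM => //; first exact: gam_aut_le.
have -> : nu (gam x)^* = (nu \o Num.Def.conjC)%FUN (gam x) by [].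
exact: (gam_aut_le x (nu \o Num.Def.conjC)%FUN).
Qed.

Lemma prod_const_seq (I : Type) (s : seq I) (c : algC) : \prod_(i <- s) c = c ^+ size s.
Proof. by elim: s => [|i s IH]; rewrite ?big_nil ?big_cons ?IH ?exprS. Qed.

Lemma conj_root x s : s \in conjugates x -> root (minCpoly x) s.
Proof. by rewrite conjP root_prod_XsubC. Qed.

Lemma HHE x : weilH (weilH x) =
  (degQ (weilH x)).-root (\prod_(s <- conjugates (weilH x)) Num.max 1 `|s|).
Proof. by rewrite [LHS]weilHE /Mv leadZ_Aint ?weilH_Aint // mul1r. Qed.

Lemma HH_le x : weilH (weilH x) <= weilH x.
Proof.
have n0 := degQ_gt0 (weilH x).
have b1 := weilH_ge1 x; have b0 : 0 <= weilH x by rewrite (le_trans ler01).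
rewrite HHE -[X in _ <= X](rootXK n0 b0) ler_rootC ?nnegrE ?exprn_ge0 //; last first.
  by rewrite (le_trans ler01) // prod_ge1 // => s; apply: max1_ge1.
rewrite -size_conj; apply: prod_le_pow => s /conj_root rs.
rewrite (le_trans ler01) ?max1_ge1 //= maxE1; case: ifP => // _.
exact: conj_le.
Qed.

Lemma HH_eq_ratpow x : weilH (weilH x) = weilH x ->
  exists (a : nat) (b : rat), 0 < b /\ weilH x = ratpow a%:R b.
Proof.
set be := weilH x => E.
have n0 := degQ_gt0 be; set n := degQ be in n0 *.
have b1 := weilH_ge1 x; have b0 : 0 <= be by rewrite (le_trans ler01).
have bgt0 : 0 < be by rewrite (lt_le_trans ltr01).
have P : \prod_(s <- conjugates be) Num.max 1 `|s| = be ^+ size (conjugates be).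
  rewrite size_conj; have := E; rewrite HHE -/n => E'.
  by rewrite -[X in _ = X ^+ _]E' rootCK.
have all_b := prod_eq_pow bgt0 _ P.
have {}all_b : forall s, s \in conjugates be -> Num.max 1 `|s| = be.
  apply: all_b => s /conj_root rs; rewrite (lt_le_trans ltr01) ?max1_ge1 //=.
  rewrite maxE1; case: ifP => // _; exact: conj_le.
have [be1 | be1] := eqVneq be 1.
  exists 1%N, 1; split => //; rewrite be1 /ratpow /=.
  by rewrite expr1z rootC1.
have lt1 : 1 < be by rewrite lt_neqAle eq_sym be1 b1.
have abs_s : forall s, s \in conjugates be -> `|s| = be.
  move=> s ss; have := all_b s ss; rewrite maxE1; case: ifP => // _ e1.
  by move: be1; rewrite -e1 eqxx.
pose z := (minCpoly be)`_0.
have zint : z \in Num.int by apply: (polyOverP (weilH_Aint x)).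
have normz : `|z| = be ^+ n.
  rewrite /z conjP coef0_prod_XsubC normrM normrX normrN1 expr1n mul1r.
  rewrite normr_prod big_seq (eq_bigr (fun _ => be)); last by move=> s /abs_s.
  by rewrite -big_seq prod_const_seq size_conj.
have /natrP [m Dm] := natr_norm_int zint.
pose b : rat := (1%:Z)%:~R / (n%:Z)%:~R.
have nb : numq b = 1.
  by rewrite /b coprimeq_num /= ?coprime1n // gtr0_sg ?mulr1 // ltz_nat.
have db : denq b = n%:Z.
  by rewrite /b coprimeq_den /= ?coprime1n //; move: n0; case: (n).
exists m, b; split.
  by rewrite /b divr_gt0 // ltr0z ltz_nat.
by rewrite /ratpow nb db expr1z /= -Dm normz rootXK.
Qed.

Lemma ratpow_HH x (a : nat) (b : rat) : 0 < b -> weilH x = ratpow a%:R b ->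
  weilH (weilH x) = weilH x.
Proof.
set be := weilH x => b0 E.
have b1 := weilH_ge1 x; have be0 : 0 <= be by rewrite (le_trans ler01).
have : 0 < numq b by rewrite numq_gt0.
case Dk : (numq b) => [k|//] k0.
have q0 : (0 < absz (denq b))%N by rewrite absz_gt0 denq_neq0.
set q := absz (denq b) in q0.
have Ebq : be ^+ q = a%:R ^+ k by rewrite E /ratpow Dk -/q rootCK.
pose r : {poly rat} := 'X^q - ((a ^ k)%N%:R)%:P.
have rbe : root (map_poly ratr r) be.
  by rewrite /r rmorphB /= map_polyXn map_polyC /= rmorph_nat /root !hornerE Ebq natrX subrr.
have [q1 [Dq1 _] minq] := minCpolyP be.
have dv : minCpoly be %| map_poly ratr r by rewrite Dq1 dvdp_map -minq.
have abs_s : forall s, s \in conjugates be -> `|s| = be.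
  move=> s /conj_root rs.
  have := root_dvdp dv rs; rewrite /r rmorphB /= map_polyXn map_polyC /= rmorph_nat.
  rewrite /root !hornerE subr_eq0 natrX => /eqP Es.
  apply/eqP; rewrite -(eqrXn2 q0) ?normr_ge0 // -normrX Es Ebq normrX normr_nat //.
have n0 := degQ_gt0 be.
rewrite HHE (eq_big_seq (fun _ => be)); last first.
  move=> s ss; rewrite abs_s // maxE1; case: ifP => // /negbT h.
  by apply/eqP; move: b1; rewrite le_eqVlt (negPf h) orbF eq_sym.
by rewrite prod_const_seq size_conj rootXK.
Qed.

Theorem lemma9p2 (alpha : algC) :
  weilH (weilH alpha) <= weilH alpha /\
  (weilH (weilH alpha) = weilH alpha <->
   exists (a : nat) (b : rat), 0 < b /\ weilH alpha = ratpow a%:R b).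
Proof.
split; first exact: HH_le.
split; first exact: HH_eq_ratpow.
by case=> a [b [b0 E]]; apply: (ratpow_HH b0 E).
Qed.
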